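(* Let $m\ge1$, $n\ge0$, $0\le i\le m$. Then the inclusion $\Lambda^{m,n}_i=(\Lambda^m_i\times\Delta^n)\cup(\Delta^m\times\partial\Delta^n)\hookrightarrow\Delta^m\times\Delta^n$ is an $m$-expansion. Likewise, for $m\ge0$, $n\ge1$, $0\le j\le n$, the inclusion $\tilde\Lambda^{m,n}_j=(\partial\Delta^m\times\Delta^n)\cup(\Delta^m\times\Lambda^n_j)\hookrightarrow\Delta^m\times\Delta^n$ is an $n$-expansion.
   Context: $\Lambda^p_i=\bigcup_{j\ne i}\partial_j\Delta^p$ is the horn and $\partial\Delta^p$ the boundary. For $m>0$, an inclusion of simplicial sets $S\hookrightarrow T$ is an $m$-expansion if there is a filtration $S=F_{-1}T\subset F_0T\subset F_1T\subset\cdots$ with $T=\bigcup_\ell F_\ell T$, a weakly monotone sequence $n_\ell\ge m$ ($\ell\ge0$), indices $0\le i_\ell\le n_\ell$, and maps $x_\ell:\Delta^{n_\ell}\to F_\ell T$, $y_\ell:\Lambda^{n_\ell}_{i_\ell}\to F_{\ell-1}T$ making $F_\ell T$ the pushout of $F_{\ell-1}T\leftarrow\Lambda^{n_\ell}_{i_\ell}\hookrightarrow\Delta^{n_\ell}$. *)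

(* Defs.v *)
From mathcomp Require Import all_boot.
Set Implicit Arguments. Unset Strict Implicit. Unset Printing Implicit Defensive.

(* Morphisms [k] -> [n] of the simplex category: weakly monotone maps
   'I_k.+1 -> 'I_n.+1. *)
Definition monob k n (f : {ffun 'I_k.+1 -> 'I_n.+1}) : bool :=
  [forall a : 'I_k.+1, forall b : 'I_k.+1, (a <= b) ==> (f a <= f b)].
Definition mono k n := {f : {ffun 'I_k.+1 -> 'I_n.+1} | monob f}.

Lemma monob_comp k l n (g : mono l n) (f : mono k l) :
  monob [ffun a => sval g (sval f a)].
Proof.
case: g f => [g Hg] [f Hf] /=; apply/forallP => a; apply/forallP => b.
apply/implyP => ab; rewrite !ffunE.
have/forallP/(_ a)/forallP/(_ b)/implyP := Hf => /(_ ab) fab.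
by have/forallP/(_ (f a))/forallP/(_ (f b))/implyP := Hg => /(_ fab).
Qed.

Definition mcomp k l n (g : mono l n) (f : mono k l) : mono k n :=
  exist (fun h => monob h) _ (monob_comp g f).

Record sSet := SSet {
  ssob :> nat -> Type;
  sact : forall k n, mono k n -> ssob n -> ssob k;
  sact_id : forall n (f : mono n n) (x : ssob n),
      (forall a, sval f a = a) -> sact f x = x;
  sact_comp : forall k l n (f : mono k l) (g : mono l n) (h : mono k n) (x : ssob n),
      (forall a, sval h a = sval g (sval f a)) -> sact f (sact g x) = sact h x }.
Arguments sact {s k n}.

Definition Delta (n : nat) : sSet.
Proof.
refine (@SSet (fun k => mono k n) (fun k l f s => mcomp s f) _ _).
- move=> m f x H; apply: val_inj; apply/ffunP => a; by rewrite ffunE /= H.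
- move=> k l m f g h x H; apply: val_inj; apply/ffunP => a.
  by rewrite /= !ffunE H.
Defined.

Definition ProdS (X Y : sSet) : sSet.
Proof.
refine (@SSet (fun k => (X k * Y k)%type)
   (fun k n f p => (sact f p.1, sact f p.2)) _ _).
- by move=> n f [x y] H /=; rewrite !sact_id.
- by move=> k l n f g h [x y] H /=; rewrite !(sact_comp _ H).
Defined.

Record smap (X Y : sSet) := SMap {
  smf :> forall n, X n -> Y n;
  smnat : forall k n (f : mono k n) (x : X n), smf (sact f x) = sact f (smf x) }.

Record subcx (X : sSet) := SubCx {
  smem : forall n, X n -> Prop;
  sclosed : forall k n (f : mono k n) (x : X n), smem x -> smem (sact f x) }.
Arguments smem {X} s {n}.

Record submap (X : sSet) (A : subcx X) (Z : sSet) := SubMap {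
  subf :> forall n (x : X n), smem A x -> Z n;
  subpi : forall n (x : X n) (p q : smem A x), subf p = subf q;
  subnat : forall k n (f : mono k n) (x : X n) (p : smem A x) (q : smem A (sact f x)),
      subf q = sact f (subf p) }.

Definition bdry (n : nat) : subcx (Delta n).
Proof.
refine (@SubCx (Delta n) (fun k (s : mono k n) =>
          exists j : 'I_n.+1, forall a, sval s a != j) _).
move=> k m f s [j Hj]; exists j => a /=; rewrite ffunE; exact: Hj.
Defined.

(* Horn Lambda^n_i = union over j <> i of the faces d_j Delta^n
   (simplices whose image misses j). *)
Definition horn (n : nat) (i : 'I_n.+1) : subcx (Delta n).
Proof.
refine (@SubCx (Delta n) (fun k (s : mono k n) =>
          exists j : 'I_n.+1, j != i /\ forall a, sval s a != j) _).
move=> k m f s [j [ji Hj]]; exists j; split => // a /=; rewrite ffunE; exact: Hj.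
Defined.

Definition hornprodL (m n : nat) (i : 'I_m.+1) : subcx (ProdS (Delta m) (Delta n)).
Proof.
refine (@SubCx (ProdS (Delta m) (Delta n))
   (fun k p => smem (horn i) p.1 \/ smem (bdry n) p.2) _).
move=> k l f [s t] [H|H]; [left; exact: (sclosed f H)|right; exact: (sclosed f H)].
Defined.

Definition hornprodR (m n : nat) (j : 'I_n.+1) : subcx (ProdS (Delta m) (Delta n)).
Proof.
refine (@SubCx (ProdS (Delta m) (Delta n))
   (fun k p => smem (bdry m) p.1 \/ smem (horn j) p.2) _).
move=> k l f [s t] [H|H]; [left; exact: (sclosed f H)|right; exact: (sclosed f H)].
Defined.

(* F' is the pushout of F <-y- Lambda^n_i -> Delta^n, with structure maps the
   inclusion F -> F' and x : Delta^n -> F'. *)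
Definition is_horn_pushout (X : sSet) (F F' : subcx X) (n : nat) (i : 'I_n.+1)
    (x : smap (Delta n) X) (y : submap (horn i) X) : Prop :=
  (forall k (t : X k), smem F t -> smem F' t) /\
  (forall k (s : Delta n k), smem F' (x k s)) /\
  (forall k (s : Delta n k) (h : smem (horn i) s), smem F (y k s h)) /\
  (forall k (s : Delta n k) (h : smem (horn i) s), y k s h = x k s) /\
  (forall (Z : sSet) (a : submap F Z) (b : smap (Delta n) Z),
     (forall k (s : Delta n k) (h : smem (horn i) s) (q : smem F (y k s h)),
        a k (y k s h) q = b k s) ->
     exists c : submap F' Z,
       (forall k (t : X k) (p : smem F t) (p' : smem F' t), c k t p' = a k t p) /\
       (forall k (s : Delta n k) (p' : smem F' (x k s)), c k (x k s) p' = b k s) /\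
       (forall c' : submap F' Z,
          (forall k (t : X k) (p : smem F t) (p' : smem F' t), c' k t p' = a k t p) ->
          (forall k (s : Delta n k) (p' : smem F' (x k s)), c' k (x k s) p' = b k s) ->
          forall k (t : X k) (p' : smem F' t), c' k t p' = c k t p')).

(* Length of the filtration: None = infinite, Some L = steps 0..L-1. *)
Definition inrange (len : option nat) (l : nat) : Prop :=
  match len with None => True | Some L => l < L end.
Definition reach (len : option nat) (l : nat) : Prop :=
  match len with None => True | Some L => l <= L end.

(* The inclusion S -> X is an m-expansion.  F l here is F_{l-1}X of the paper;
   step l attaches an (nn l)-simplex along the horn Lambda^{nn l}_{ii l}. *)
Definition expansion (m : nat) (X : sSet) (S : subcx X) : Prop :=
  exists (len : option nat) (F : nat -> subcx X) (nn : nat -> nat)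
         (ii : forall l, 'I_(nn l).+1)
         (x : forall l, smap (Delta (nn l)) X)
         (y : forall l, submap (horn (ii l)) X),
    (forall k (t : X k), smem (F 0) t <-> smem S t) /\
    (forall k (t : X k), exists l, reach len l /\ smem (F l) t) /\
    (forall l, inrange len l -> m <= nn l) /\
    (forall l, inrange len l.+1 -> nn l <= nn l.+1) /\
    (forall l, inrange len l -> is_horn_pushout (F l) (F l.+1) (x l) (y l)).

(* Main.v *)
Require Import Defs.
From mathcomp Require Import all_boot zify.
From Stdlib Require Import ClassicalEpsilon ProofIrrelevance Classical.
Set Implicit Arguments. Unset Strict Implicit. Unset Printing Implicit Defensive.

Lemma submap_eqt X (A : subcx X) Z (a : submap A Z) k (t1 t2 : X k)
  (p1 : smem A t1) (p2 : smem A t2) : t1 = t2 -> a k t1 p1 = a k t2 p2.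
Proof. move=> e; subst t2; exact: subpi. Qed.

Definition restrict_map d (i : 'I_d.+1) X (x : smap (Delta d) X) : submap (horn i) X.
Proof.
refine (@SubMap _ (horn i) X (fun k s _ => x k s) _ _).
- by [].
- move=> k n f s p q; exact: smnat.
Defined.

Section PO.
Variables (X : sSet) (F F' : subcx X) (d : nat) (i : 'I_d.+1) (x : smap (Delta d) X).
Hypothesis sub : forall k (t : X k), smem F t -> smem F' t.
Hypothesis xin : forall k (s : Delta d k), smem F' (x k s).
Hypothesis cov : forall k (t : X k), smem F' t -> smem F t \/ exists s, x k s = t.
Hypothesis hb : forall k (s : Delta d k), smem F (x k s) <-> smem (horn i) s.
Hypothesis inj : forall k (s s' : Delta d k), x k s = x k s' -> s = s'.

Definition exs k (t : X k) (p' : smem F' t) (np : ~ smem F t) : exists s, x k s = t :=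
  match cov p' with or_introl h => False_ind _ (np h) | or_intror e => e end.

Definition cf Z (a : submap F Z) (b : smap (Delta d) Z) k (t : X k) (p' : smem F' t) : Z k :=
  match excluded_middle_informative (smem F t) with
  | left h => a k t h
  | right nh => b k (proj1_sig (constructive_indefinite_description _ (exs p' nh)))
  end.

Variables (Z : sSet) (a : submap F Z) (b : smap (Delta d) Z).
Hypothesis compat : forall k (s : Delta d k) (h : smem (horn i) s)
   (q : smem F (restrict_map i x k s h)), a k (restrict_map i x k s h) q = b k s.

Lemma cf_eqt k (t1 t2 : X k) (p1 : smem F' t1) (p2 : smem F' t2) :
  t1 = t2 -> cf a b p1 = cf a b p2.
Proof. move=> e; subst t2; by rewrite (proof_irrelevance _ p1 p2). Qed.

Lemma cfF k (t : X k) (p' : smem F' t) (p : smem F t) : cf a b p' = a k t p.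
Proof. rewrite /cf; case: excluded_middle_informative => [h|nh]; [exact: subpi|by []]. Qed.

Lemma cfx k (s : Delta d k) (p' : smem F' (x k s)) : cf a b p' = b k s.
Proof.
rewrite /cf; case: excluded_middle_informative => [h|nh].
  have hs := (hb s).1 h; exact (@compat k s hs h).
case: constructive_indefinite_description => s' /= e; by rewrite (inj e).
Qed.

Definition cmap : submap F' Z.
Proof.
refine (@SubMap _ F' Z (fun k t p => cf a b p) _ _).
- move=> k t p q; by rewrite (proof_irrelevance _ p q).
- move=> k n0 f t p q.
  case: (classic (smem F t)) => h.
    rewrite (cfF _ h) (cfF _ (sclosed f h)); exact: subnat.
  case: (cov p) => // -[s e]; subst t.
  rewrite cfx (@cf_eqt _ _ (x k (sact f s)) q (xin _)); last by rewrite smnat.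
  by rewrite cfx smnat.
Defined.

End PO.

Lemma po X (F F' : subcx X) d (i : 'I_d.+1) (x : smap (Delta d) X) :
  (forall k (t : X k), smem F t -> smem F' t) ->
  (forall k (s : Delta d k), smem F' (x k s)) ->
  (forall k (t : X k), smem F' t -> smem F t \/ exists s, x k s = t) ->
  (forall k (s : Delta d k), smem F (x k s) <-> smem (horn i) s) ->
  (forall k (s s' : Delta d k), x k s = x k s' -> s = s') ->
  is_horn_pushout F F' x (restrict_map i x).
Proof.
move=> sub xin cov hb inj.
split => //; split => //; split; first by move=> k s h; apply/hb.
split => // Z a b compat.
exists (cmap xin cov hb inj compat); split.
  move=> k t p p' /=; exact: cfF.
split.
  move=> k s p' /=; exact: cfx.
move=> c' h1 h2 k t p' /=.
case: (classic (smem F t)) => h.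
  by rewrite (h1 _ _ h) cfF.
case: (cov _ _ p') => // -[s e]; subst t.
by rewrite h2; symmetry; apply: cfx.
Qed.

Lemma cst_monob k n : monob ([ffun _ => ord0] : {ffun 'I_k.+1 -> 'I_n.+1}).
Proof. by apply/forallP => a; apply/forallP => b; rewrite !ffunE; apply/implyP. Qed.

Definition cst0 k n : mono k n := exist (fun h => monob h) _ (cst_monob k n).
Definition mkmono k n (f : {ffun 'I_k.+1 -> 'I_n.+1}) : mono k n := insubd (cst0 k n) f.

Lemma mkmonoE k n (f : {ffun 'I_k.+1 -> 'I_n.+1}) : monob f -> sval (mkmono f) = f.
Proof. move=> h; exact: (insubdK (cst0 k n) h). Qed.

Section Enum.
Variables m n : nat.
Definition PT := ('I_m.+1 * 'I_n.+1)%type.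
Definition XX := ProdS (Delta m) (Delta n).
Implicit Types (A B C D : {set PT}).
Definition lep (p q : PT) := (p.1 <= q.1) && (p.2 <= q.2).
Definition chain (A : {set PT}) := [forall p in A, forall q in A, lep p q || lep q p].
Definition pt k (t : XX k) (a : 'I_k.+1) : PT := (sval t.1 a, sval t.2 a).
Definition img k (t : XX k) : {set PT} := [set pt t a | a : 'I_k.+1].

Lemma lep_refl : reflexive lep. Proof. by move=> p; rewrite /lep !leqnn. Qed.
Lemma lep_trans : transitive lep.
Proof.
move=> q p r /andP[h1 h2] /andP[h3 h4]; apply/andP; split; [exact: (leq_trans h1 h3)|exact: (leq_trans h2 h4)].
Qed.
Lemma lep_anti p q : lep p q -> lep q p -> p = q.
Proof.
case: p q => [x y] [x' y'] /andP[/= h1 h2] /andP[/= h3 h4].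
have e1 : x = x' by apply/val_inj/eqP; rewrite eqn_leq h1 h3.
have e2 : y = y' by apply/val_inj/eqP; rewrite eqn_leq h2 h4.
by rewrite e1 e2.
Qed.

Lemma pt_mono k (t : XX k) (a b : 'I_k.+1) : a <= b -> lep (pt t a) (pt t b).
Proof.
case: t => [[f hf] [g hg]] ab; rewrite /lep /pt /=.
have/forallP/(_ a)/forallP/(_ b)/implyP := hf => /(_ ab) ->.
by have/forallP/(_ a)/forallP/(_ b)/implyP := hg => /(_ ab) ->.
Qed.

Lemma img_chain k (t : XX k) : chain (img t).
Proof.
apply/forallP => p; apply/implyP => /imsetP[a _ ->].
apply/forallP => q; apply/implyP => /imsetP[b _ ->].
case: (leqP a b) => ab; first by rewrite pt_mono.
by apply/orP; right; apply: pt_mono; exact: ltnW.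
Qed.

Lemma img0 k (t : XX k) : pt t ord0 \in img t.
Proof. exact: imset_f. Qed.

Lemma eqXX k (t t' : XX k) : (forall a, pt t a = pt t' a) -> t = t'.
Proof.
case: t t' => [[f hf] [g hg]] [[f' hf'] [g' hg']] /= h.
have e1 : f = f' by apply/ffunP => a; have := h a; case.
have e2 : g = g' by apply/ffunP => a; have := h a; case.
subst f' g'; by rewrite (proof_irrelevance _ hf hf') (proof_irrelevance _ hg hg').
Qed.

Lemma chain_sub (A B : {set PT}) : A \subset B -> chain B -> chain A.
Proof.
move=> /subsetP sAB /forallP H; apply/forallP => p; apply/implyP => pA.
apply/forallP => q; apply/implyP => qA.
by have/implyP/(_ (sAB _ pA))/forallP/(_ q)/implyP/(_ (sAB _ qA)) := H p.
Qed.

Definition sA (A : {set PT}) : seq PT := sort lep (enum A).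
Definition dimA (A : {set PT}) := #|A|.-1.
Definition ptA A (j : nat) : PT := nth (ord0, ord0) (sA A) j.

Lemma size_sA A : size (sA A) = #|A|.
Proof. by rewrite size_sort cardE. Qed.
Lemma uniq_sA A : uniq (sA A).
Proof. by rewrite sort_uniq enum_uniq. Qed.
Lemma mem_sA A p : (p \in sA A) = (p \in A).
Proof. by rewrite mem_sort mem_enum. Qed.
Lemma sorted_sA A : chain A -> sorted lep (sA A).
Proof.
move=> /forallP H; apply: (@sort_sorted_in _ (mem A)).
  move=> p q pA qA; by have/implyP/(_ pA)/forallP/(_ q)/implyP/(_ qA) := H p.
by apply/allP => p; rewrite mem_enum.
Qed.

Lemma dimAE A x : x \in A -> (dimA A).+1 = #|A|.
Proof. by move=> xA; rewrite /dimA prednK //; apply/card_gt0P; exists x. Qed.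

Lemma ptA_in A j : j < #|A| -> ptA A j \in A.
Proof. by move=> h; rewrite -mem_sA mem_nth // size_sA. Qed.

Lemma ptA_inj A i j : i < #|A| -> j < #|A| -> ptA A i = ptA A j -> i = j.
Proof.
move=> hi hj e; apply/eqP; rewrite -(nth_uniq (ord0, ord0) _ _ (uniq_sA A)) ?size_sA //.
by rewrite /ptA in e; rewrite e.
Qed.

Lemma ptA_mono A i j : chain A -> i <= j -> j < #|A| -> lep (ptA A i) (ptA A j).
Proof.
move=> cA ij hj; apply: (sorted_leq_nth lep_trans lep_refl _ (sorted_sA cA)) => //.
  by rewrite inE size_sA (leq_ltn_trans ij).
by rewrite inE size_sA.
Qed.

Lemma index_mono A p q : chain A -> p \in A -> q \in A -> lep p q ->
  index p (sA A) <= index q (sA A).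
Proof.
move=> cA pA qA pq; rewrite leqNgt; apply/negP => qp.
have hp : index p (sA A) < #|A| by rewrite -size_sA index_mem mem_sA.
have := ptA_mono cA (ltnW qp) hp.
rewrite /ptA !nth_index ?mem_sA // => qp'.
have e := lep_anti pq qp'; subst q; by rewrite ltnn in qp.
Qed.

Lemma ptA_index A p : p \in A -> ptA A (index p (sA A)) = p.
Proof. by move=> pA; rewrite /ptA nth_index ?mem_sA. Qed.

Lemma index_lt A p : p \in A -> index p (sA A) < #|A|.
Proof. by move=> pA; rewrite -size_sA index_mem mem_sA. Qed.
End Enum.

Lemma mcompE k l n (g : mono l n) (f : mono k l) a : sval (mcomp g f) a = sval g (sval f a).
Proof. by rewrite /= ffunE. Qed.
Lemma mcompA k l p n (g : mono p n) (s : mono l p) (f : mono k l) :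
  mcomp g (mcomp s f) = mcomp (mcomp g s) f.
Proof. apply: val_inj; apply/ffunP => a; by rewrite !mcompE. Qed.

Section Top.
Variables m n : nat.
Implicit Types A : {set PT m n}.

Definition topA A : XX m n (dimA A) :=
  (mkmono [ffun a : 'I_(dimA A).+1 => (ptA A a).1],
   mkmono [ffun a : 'I_(dimA A).+1 => (ptA A a).2]).

Definition xA A : smap (Delta (dimA A)) (XX m n).
Proof.
refine (@SMap (Delta (dimA A)) (XX m n) (fun k (s : mono k (dimA A)) => @sact (XX m n) _ _ s (topA A)) _).
move=> k l f s /=; by rewrite !mcompA.
Defined.

Lemma topA_pt A x (a : 'I_(dimA A).+1) : chain A -> x \in A -> pt (topA A) a = ptA A a.
Proof.
move=> cA xA.
have hm : forall a b : 'I_(dimA A).+1, a <= b -> lep (ptA A a) (ptA A b).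
  move=> a0 b0 ab; apply: ptA_mono => //; rewrite -(dimAE xA); exact: ltn_ord.
rewrite /pt /= !mkmonoE ?ffunE; first by case: (ptA A a).
- apply/forallP => a0; apply/forallP => b0; apply/implyP => ab; rewrite !ffunE.
  by have/andP[] := hm _ _ ab.
- apply/forallP => a0; apply/forallP => b0; apply/implyP => ab; rewrite !ffunE.
  by have/andP[] := hm _ _ ab.
Qed.

Lemma pt_xA A x k (s : mono k (dimA A)) (a : 'I_k.+1) : chain A -> x \in A ->
  pt (xA A k s) a = ptA A (sval s a).
Proof.
move=> cA xA.
rewrite -(topA_pt (sval s a) cA xA).
by rewrite /pt /= !mcompE.
Qed.

Lemma xA_inj A x k (s s' : mono k (dimA A)) : chain A -> x \in A ->
  xA A k s = xA A k s' -> s = s'.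
Proof.
move=> cA xA e; apply: val_inj; apply/ffunP => a.
have := congr1 (fun t => pt t a) e; rewrite !(pt_xA _ _ cA xA) => /ptA_inj.
rewrite -(dimAE xA) !ltn_ord => /(_ isT isT) h; exact: val_inj.
Qed.

Lemma xA_img A x k (s : mono k (dimA A)) : chain A -> x \in A ->
  img (xA A k s) = [set ptA A (sval s a) | a : 'I_k.+1].
Proof.
move=> cA xA; apply/setP => p; apply/imsetP/imsetP => -[a _ ->]; exists a => //;
  by rewrite (pt_xA _ _ cA xA).
Qed.

Lemma xA_sub A x k (s : mono k (dimA A)) : chain A -> x \in A -> img (xA A k s) \subset A.
Proof.
move=> cA xA; rewrite (xA_img _ cA xA); apply/subsetP => p /imsetP[a _ ->].
apply: ptA_in; rewrite -(dimAE xA); exact: ltn_ord.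
Qed.

Lemma xA_cov A x k (t : XX m n k) : chain A -> x \in A -> img t \subset A ->
  exists s, xA A k s = t.
Proof.
move=> cA xA /subsetP sub.
have tin : forall a, pt t a \in A by move=> a; apply: sub; exact: imset_f.
have ilt : forall a, index (pt t a) (sA A) < (dimA A).+1.
  by move=> a; rewrite (dimAE xA) index_lt.
pose f := [ffun a => (inord (index (pt t a) (sA A)) : 'I_(dimA A).+1)].
have mf : monob f.
  apply/forallP => a; apply/forallP => b; apply/implyP => ab; rewrite !ffunE.
  rewrite !inordK //; apply: index_mono => //; exact: pt_mono.
exists (mkmono f); apply: eqXX => a.
by rewrite (pt_xA _ _ cA xA) mkmonoE // ffunE inordK // ptA_index.
Qed.

Lemma xA_horn A x q0 k (s : mono k (dimA A)) : chain A -> x \in A -> q0 \in A ->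
  smem (horn (inord (index q0 (sA A)) : 'I_(dimA A).+1)) s <->
  exists2 q, q \in A & (q != q0) && (q \notin img (xA A k s)).
Proof.
move=> cA xA q0A; rewrite (xA_img _ cA xA).
have hlt : forall j : 'I_(dimA A).+1, j < #|A| by move=> j; rewrite -(dimAE xA).
have q0lt : index q0 (sA A) < (dimA A).+1 by rewrite (dimAE xA) index_lt.
split.
  move=> [j [jne hj]]; exists (ptA A j); first exact: ptA_in.
  apply/andP; split.
    apply/eqP => e; move/eqP: jne; apply; apply: val_inj; rewrite /= inordK //.
    apply: (ptA_inj (hlt j) (index_lt q0A)); by rewrite ptA_index.
  apply/imsetP => -[a _ e]; have := hj a; rewrite -(inj_eq val_inj) /=.
  by rewrite (ptA_inj (hlt _) (hlt _) e) eqxx.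
move=> [q qA /andP[qne qni]].
exists (inord (index q (sA A))); split.
  rewrite -(inj_eq val_inj) /= !inordK ?(dimAE xA) ?index_lt //.
  apply/eqP => e; move/eqP: qne; apply.
  by rewrite -(ptA_index qA) e ptA_index.
move=> a; apply/eqP => e; move/imsetP: qni; apply; exists a => //.
by rewrite e inordK ?(dimAE xA) ?index_lt // ptA_index.
Qed.

Lemma img_sact k l (f : mono k l) (t : XX m n l) : img (sact f t) \subset img t.
Proof.
apply/subsetP => p /imsetP[a _ ->]; apply/imsetP; exists (sval f a) => //.
by rewrite /pt /= !mcompE.
Qed.
End Top.

Section Core.
Variables (m n : nat) (S : subcx (XX m n)).
Implicit Types (A B C D : {set PT m n}).
Variables (miss : {set PT m n} -> bool) (tog : {set PT m n} -> PT m n)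
  (col : PT m n -> bool) (mb : nat).
Hypothesis hS : forall k (t : XX m n k), smem S t <-> ~~ miss (img t).
Hypothesis H1 : forall A q, col q -> tog (q |: A) = tog A.
Hypothesis H2 : forall A, col (tog A).
Hypothesis H3 : forall A, chain A -> miss A -> miss (A :\ tog A).
Hypothesis H4 : forall A, chain A -> miss A -> chain (tog A |: A).
Hypothesis H5 : forall A B, A \subset B -> miss A -> miss B.
Hypothesis Hb : forall A, chain A -> miss A -> tog A \in A -> mb < #|A|.

Definition big A := [&& chain A, miss A & tog A \in A].
Definition cnt A := #|[set p in A | col p]|.
Definition leK A B := (#|A| < #|B|) || ((#|A| == #|B|) && (cnt B <= cnt A)).
Definition L := sort leK [seq A <- enum [set: {set PT m n}] | big A].
Definition LA r := nth set0 L r.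

Lemma leK_refl : reflexive leK.
Proof. by move=> A; rewrite /leK eqxx leqnn orbT. Qed.
Lemma leK_trans : transitive leK.
Proof.
move=> B A C; rewrite /leK.
case/orP => [h1|/andP[/eqP e1 h1]]; case/orP => [h2|/andP[/eqP e2 h2]].
- by rewrite (ltn_trans h1 h2).
- by rewrite -e2 h1.
- by rewrite e1 h2.
- by rewrite e1 e2 eqxx (leq_trans h2 h1) orbT.
Qed.
Lemma leK_total : total leK.
Proof.
move=> A B; rewrite /leK; case: (ltngtP #|A| #|B|) => //= _; exact: leq_total.
Qed.

Lemma memL A : (A \in L) = big A.
Proof. by rewrite mem_sort mem_filter mem_enum in_setT andbT. Qed.
Lemma uniqL : uniq L.
Proof. by rewrite sort_uniq filter_uniq // enum_uniq. Qed.
Lemma sortedL : sorted leK L.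
Proof. exact: sort_sorted leK_total _. Qed.

Lemma LA_big r : r < size L -> big (LA r).
Proof. by move=> h; rewrite -memL mem_nth. Qed.

Lemma LA_le r l : r <= l -> l < size L -> leK (LA r) (LA l).
Proof.
move=> rl hl; apply: (sorted_leq_nth leK_trans leK_refl _ sortedL) => //.
by rewrite inE (leq_ltn_trans rl).
Qed.

Lemma LA_neq r l : r < l -> l < size L -> LA r != LA l.
Proof.
move=> rl hl; rewrite /LA nth_uniq ?uniqL //; first by rewrite neq_ltn rl.
exact: ltn_trans hl.
Qed.

Lemma before A l : l < size L -> big A -> ~~ leK (LA l) A ->
  exists r, [/\ r < l, r < size L & LA r = A].
Proof.
move=> hl bA nle; exists (index A L).
have hA : index A L < size L by rewrite index_mem memL.
split => //; last by rewrite /LA nth_index // memL.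
rewrite ltnNge; apply/negP => le; move/negP: nle; apply.
by have := LA_le le hA; rewrite {2}/LA nth_index // memL.
Qed.

Lemma cntU x A : cnt (x |: A) = (col x && (x \notin A)) + cnt A.
Proof.
rewrite /cnt; case cx: (col x) => /=.
  have -> : [set p in x |: A | col p] = x |: [set p in A | col p].
    apply/setP => p; rewrite !inE; case: (eqVneq p x) => [->|ne]; by rewrite ?cx ?(negbTE ne).
  by rewrite cardsU1 inE cx andbT.
rewrite /= ?add0n.
apply: eq_card => p; rewrite !inE; case: (eqVneq p x) => [->|ne]; by rewrite ?cx ?andbF ?(negbTE ne).
Qed.

Definition Fl (l : nat) : subcx (XX m n).
Proof.
refine (@SubCx _ (fun k t => smem S t \/
   exists r, [/\ r < l, r < size L & img t \subset LA r]) _).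
move=> k k' f t [h|[r [h1 h2 h3]]]; first by left; exact: sclosed.
right; exists r; split => //; exact: subset_trans (img_sact f t) h3.
Defined.

Lemma core_iff l C : l < size L -> C \subset LA l ->
  (~~ miss C \/ exists r, [/\ r < l, r < size L & C \subset LA r]) <->
  exists2 q, q \in LA l & (q != tog (LA l)) && (q \notin C).
Proof.
move=> hl CA; have := LA_big hl; set A := LA l => /and3P[cA mA tA].
split.
  move=> H; apply: NNPP => nq.
  have DC : A :\ tog A \subset C.
    apply/subsetP => p; rewrite !inE => /andP[hp pA]; apply: NNPP => pC.
    apply: nq; exists p => //; rewrite hp; exact/negP.
  have mC := H5 DC (H3 cA mA).
  case: H => [|[r [rl rs BC]]]; first by rewrite mC.
  have := LA_big rs; set B := LA r => /and3P[cB mB tB].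
  have leBA : leK B A by apply: LA_le => //; exact: ltnW.
  have nBA : B != A by exact: LA_neq.
  have eA : A = tog A |: (A :\ tog A) by rewrite setD1K.
  have etD : tog (A :\ tog A) = tog A by rewrite [in RHS]eA H1 ?H2.
  have DB : A :\ tog A \subset B := subset_trans DC BC.
  have cardA : #|A| = (#|A :\ tog A|).+1 by rewrite (cardsD1 (tog A) A) tA.
  have cBA : #|B| <= #|A|.
    by move: leBA; rewrite /leK => /orP[/ltnW|/andP[/eqP ->]].
  have ntB : tog A \notin B.
    apply/negP => tB'; move/negP: nBA; apply; rewrite eq_sym eqEcard cBA andbT.
    by rewrite eA subUset sub1set tB' DB.
  have [q qB qD] : exists2 q, q \in B & q \notin A :\ tog A.
    apply: NNPP => nex.
    have eBD : B = A :\ tog A.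
      apply/eqP; rewrite eqEsubset DB andbT; apply/subsetP => q qB.
      apply: NNPP => qD; apply: nex; exists q => //; exact/negP.
    by move: tB; rewrite eBD etD setD11.
  have eB : B = q |: (A :\ tog A).
    apply/eqP; rewrite eq_sym eqEcard subUset sub1set qB DB /=.
    by rewrite cardsU1 qD add1n -cardA cBA.
  have cardB : #|B| = #|A| by rewrite eB cardsU1 qD cardA.
  have cntle : cnt A <= cnt B.
    by move: leBA; rewrite /leK cardB ltnn eqxx /=.
  case cq: (col q).
    by move: tB; rewrite eB H1 // etD -eB (negbTE ntB).
  move: cntle; rewrite eB cntU cq /= {1}eA cntU H2 /=.
  by rewrite setD11 /= ltnn.
move=> [q qA /andP[qt qC]].
set D := A :\ q.
have CD : C \subset D.
  apply/subsetP => p pC; rewrite !inE (subsetP CA _ pC) andbT.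
  by apply/eqP => e; move: qC; rewrite -e pC.
have eA : A = q |: D by rewrite setD1K.
have cardA : #|A| = (#|D|).+1 by rewrite (cardsD1 q A) qA.
case mD: (miss D); last first.
  by left; apply/negP => mC; move: (H5 CD mC); rewrite mD.
right.
have cD : chain D by apply: chain_sub cA; exact: subD1set.
case tD: (tog D \in D).
  have [r [rl rs e]] : exists r, [/\ r < l, r < size L & LA r = D].
    apply: before => //; first by rewrite /big cD mD tD.
    rewrite /leK -/A cardA; apply/negP => /orP[h|/andP[/eqP h _]]; lia.
  by exists r; split => //; rewrite e.
set D' := tog D |: D.
have bD' : big D'.
  rewrite /big H4 //= (H5 (subsetUr _ _) mD) /= /D' H1 //; exact: setU11.
have ncq : ~~ col q.
  apply/negP => cq.
  have : tog A \in D by rewrite !inE eq_sym qt tA.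
  by rewrite eA H1 // tD.
have [r [rl rs e]] : exists r, [/\ r < l, r < size L & LA r = D'].
  apply: before => //.
  have c1 : cnt A = cnt D by rewrite eA cntU (negbTE ncq).
  have c2 : cnt D' = (cnt D).+1 by rewrite /D' cntU H2 tD.
  have c3 : #|D'| = (#|D|).+1 by rewrite /D' cardsU1 tD.
  by rewrite /leK -/A cardA c1 c2 c3 !ltnn andbF.
exists r; split => //; rewrite e; apply: subset_trans CD _; exact: subsetUr.
Qed.

Definition nnL l := dimA (LA l).
Definition iiL l : 'I_(nnL l).+1 := inord (index (tog (LA l)) (sA (LA l))).
Definition xL l : smap (Delta (nnL l)) (XX m n) := xA (LA l).
Definition yL l : submap (horn (iiL l)) (XX m n) := restrict_map (iiL l) (xL l).

Lemma step l : l < size L -> is_horn_pushout (Fl l) (Fl l.+1) (xL l) (yL l).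
Proof.
move=> hl; have := LA_big hl => /and3P[cA mA tA].
apply: po.
- move=> k t [h|[r [h1 h2 h3]]]; first by left.
  by right; exists r; split => //; rewrite ltnS ltnW.
- move=> k s; right; exists l; split => //; exact: xA_sub cA tA.
- move=> k t [h|[r [h1 h2 h3]]]; first by left; left.
  case: (ltngtP r l) => [rl|lr|e].
  + by left; right; exists r.
  + by rewrite ltnS leqNgt lr in h1.
  + subst r; right; exact: xA_cov cA tA h3.
- move=> k s; split.
  + move=> h; apply/(xA_horn _ cA tA tA); apply/(core_iff hl (xA_sub _ cA tA)).
    case: h => [h|h]; [left; exact/hS | right; exact: h].
  + move=> /(xA_horn _ cA tA tA) /(core_iff hl (xA_sub _ cA tA)) [h|h].
    * by left; apply/hS.
    * by right.
- move=> k s s'; exact: xA_inj cA tA.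
Qed.

Lemma expansion_core : expansion mb S.
Proof.
exists (Some (size L)), Fl, nnL, iiL, xL, yL.
split.
  move=> k t; split => [[h|[r [h _ _]]]//|h]; by left.
split.
  move=> k t.
  case mC: (miss (img t)); last first.
    by exists 0; split => //; left; apply/hS; rewrite mC.
  have cC := img_chain t.
  have [C bC sC] : exists2 C, big C & img t \subset C.
    case tC: (tog (img t) \in img t).
      by exists (img t) => //; rewrite /big cC mC tC.
    exists (tog (img t) |: img t); last exact: subsetUr.
    by rewrite /big H4 //= (H5 (subsetUr _ _) mC) /= H1 ?H2 // setU11.
  have hi : index C L < size L by rewrite index_mem memL.
  exists (index C L).+1; split => //; right; exists (index C L); split => //.
  by rewrite /LA nth_index ?memL.
split.
  move=> l /= hl; have := LA_big hl => /and3P[cA mA tA].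
  rewrite /nnL /dimA; have := Hb cA mA tA.
  by case: #|LA l|.
split.
  move=> l /= hl; rewrite /nnL /dimA -!subn1 leq_sub2r //.
  have := LA_le (leqnSn l) hl; rewrite /leK => /orP[h|/andP[/eqP -> _]] //.
  exact: ltnW.
move=> l hl; exact: step.
Qed.
End Core.

Lemma chainU1 m n (A : {set PT m n}) t : chain A ->
  (forall p, p \in A -> lep p t || lep t p) -> chain (t |: A).
Proof.
move=> /forallP cA ht; apply/forallP => p; apply/implyP; rewrite in_setU1.
case/orP => [/eqP ->|pA]; apply/forallP => q; apply/implyP; rewrite in_setU1.
- case/orP => [/eqP ->|qA]; first by rewrite lep_refl.
  by rewrite orbC ht.
- case/orP => [/eqP ->|qA]; first exact: ht.
  by have/implyP/(_ pA)/forallP/(_ q)/implyP/(_ qA) := cA p.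
Qed.

Section Tog.
Variables (m n a b : nat).
Local Notation P := (PT m n).
Implicit Types (A B L H : {set P}) (p q : P).
Variables (c1 : P -> 'I_a.+1) (c2 : P -> 'I_b.+1) (mk : 'I_a.+1 -> 'I_b.+1 -> P).
Hypothesis c1mk : forall x y, c1 (mk x y) = x.
Hypothesis c2mk : forall x y, c2 (mk x y) = y.
Hypothesis hl : forall p q, lep p q = (c1 p <= c1 q) && (c2 p <= c2 q).
Variable i : 'I_a.+1.
Hypothesis ha : 0 < a.

Definition missG A := [forall y : 'I_b.+1, [exists p in A, c2 p == y]] &&
   [forall x : 'I_a.+1, (x != i) ==> [exists p in A, c1 p == x]].
Definition colG p := c1 p == i.
Definition lo A := [set p in A | c1 p < i].
Definition hi A := [set p in A | i < c1 p].
Definition togv (L H : {set P}) : 'I_b.+1 :=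
  match [pick p in L] with
  | Some p0 => c2 [arg max_(p > p0 in L) (c2 p : nat)]
  | None => match [pick p in H] with
            | Some p0 => c2 [arg min_(p < p0 in H) (c2 p : nat)]
            | None => ord0 end end.
Definition togG A := mk i (togv (lo A) (hi A)).

Lemma togv_lo L H p : p \in L -> exists2 q, q \in L &
  togv L H = c2 q /\ forall p', p' \in L -> c2 p' <= c2 q.
Proof.
move=> pL; rewrite /togv; case: pickP => [p0 p0L|none]; last by rewrite none in pL.
by case: arg_maxnP => // q qL qmax; exists q.
Qed.

Lemma togv_hi L H p : (forall p', p' \notin L) -> p \in H -> exists2 q, q \in H &
  togv L H = c2 q /\ forall p', p' \in H -> c2 q <= c2 p'.
Proof.
move=> nL pH; rewrite /togv; case: pickP => [p0 p0L|_]; first by rewrite (negbTE (nL p0)) in p0L.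
case: pickP => [p0 p0H|none]; last by rewrite none in pH.
by case: arg_minnP => // q qH qmin; exists q.
Qed.

Lemma H1G A q : colG q -> togG (q |: A) = togG A.
Proof.
move=> /eqP cq; rewrite /togG /lo /hi.
have -> : [set p in q |: A | c1 p < i] = [set p in A | c1 p < i].
  apply/setP => p; rewrite !inE; case: (eqVneq p q) => [->|ne]; by rewrite ?cq ?ltnn ?andbF ?(negbTE ne).
have -> : [set p in q |: A | i < c1 p] = [set p in A | i < c1 p].
  apply/setP => p; rewrite !inE; case: (eqVneq p q) => [->|ne]; by rewrite ?cq ?ltnn ?andbF ?(negbTE ne).
by [].
Qed.

Lemma H2G A : colG (togG A).
Proof. by rewrite /colG /togG c1mk. Qed.

Lemma H5G A B : A \subset B -> missG A -> missG B.
Proof.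
move=> /subsetP sAB /andP[/forallP h1 /forallP h2]; apply/andP; split.
  apply/forallP => y; have/existsP[p /andP[pA e]] := h1 y.
  by apply/existsP; exists p; rewrite sAB.
apply/forallP => x; apply/implyP => xi; have/implyP/(_ xi)/existsP[p /andP[pA e]] := h2 x.
by apply/existsP; exists p; rewrite sAB.
Qed.

Definition other : 'I_a.+1 := if i == ord0 then inord 1 else ord0.
Lemma other_ne : other != i.
Proof.
rewrite /other; case: (eqVneq i ord0) => [->|ne] //.
by rewrite -(inj_eq val_inj) /= inordK.
by rewrite eq_sym.
Qed.

Lemma tog_wit A : missG A -> exists2 q, q \in A & (c1 q != i) && (c2 q == c2 (togG A)).
Proof.
move=> /andP[_ /forallP h2].
have [p pA /eqP po] : exists2 p, p \in A & c1 p == other.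
  have/implyP/(_ other_ne)/existsP[p /andP[pA e]] := h2 other; by exists p.
case: (boolP [exists p, p \in lo A]) => [/existsP[p' p'lo]|nlo].
  have [q qlo [e _]] := togv_lo (hi A) p'lo.
  move: qlo; rewrite inE => /andP[qA qi]; exists q => //.
  by rewrite /togG c2mk e eqxx andbT neq_ltn qi.
have nL : forall p', p' \notin lo A.
  by move=> p'; apply/negP => h; move/negP: nlo; apply; apply/existsP; exists p'.
have phi : p \in hi A.
  rewrite inE pA /=; have := nL p; rewrite inE pA /= -leqNgt leq_eqVlt => /orP[/eqP e|//].
  have e2 : c1 p = i by apply: val_inj; rewrite /= e.
  by move: other_ne; rewrite -po e2 eqxx.
have [q qhi [e _]] := togv_hi nL phi.
move: qhi; rewrite inE => /andP[qA qi]; exists q => //.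
by rewrite /togG c2mk e eqxx andbT neq_ltn qi orbT.
Qed.

Lemma H3G A : chain A -> missG A -> missG (A :\ togG A).
Proof.
move=> cA mA; have [q qA /andP[qi /eqP qt]] := tog_wit mA.
move: mA => /andP[/forallP h1 /forallP h2]; apply/andP; split.
  apply/forallP => y; have/existsP[p /andP[pA /eqP e]] := h1 y.
  apply/existsP; case: (eqVneq p (togG A)) => [ep|ne].
    exists q; rewrite !inE qA andbT qt -ep e eqxx andbT.
    by rewrite ep; apply/eqP => eq; move: qi; rewrite eq /togG c1mk eqxx.
  by exists p; rewrite !inE ne pA e eqxx.
apply/forallP => x; apply/implyP => xi; have/implyP/(_ xi)/existsP[p /andP[pA /eqP e]] := h2 x.
apply/existsP; exists p; rewrite !inE pA e eqxx !andbT.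
by apply/eqP => ep; move: xi; rewrite -e ep /togG c1mk eqxx.
Qed.

Lemma H4G A : chain A -> missG A -> chain (togG A |: A).
Proof.
move=> cA mA; apply: chainU1 => // p pA; rewrite !hl /togG c1mk c2mk.
case: (ltngtP (c1 p) i) => [lt|gt|eq].
- have plo : p \in lo A by rewrite inE pA lt.
  have [q _ [-> qmax]] := togv_lo (hi A) plo.
  by rewrite qmax.
- case: (boolP [exists p, p \in lo A]) => [/existsP[p' p'lo]|nlo].
    have [q qlo [e _]] := togv_lo (hi A) p'lo.
    move: qlo; rewrite inE => /andP[qA qi].
    have := (forallP cA) q; rewrite qA /= => /forallP/(_ p); rewrite pA /= !hl.
    case/orP => /andP[h h'].
      by rewrite e h'.
    by move: (leq_trans h (ltnW qi)); rewrite leqNgt gt.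
  have nL : forall p', p' \notin lo A.
    by move=> p'; apply/negP => h; move/negP: nlo; apply; apply/existsP; exists p'.
  have phi : p \in hi A by rewrite inE pA gt.
  have [q _ [-> qmin]] := togv_hi nL phi.
  by rewrite qmin.
- by rewrite leq_total.
Qed.

Lemma HbG A : chain A -> missG A -> togG A \in A -> a < #|A|.
Proof.
move=> _ /andP[_ /forallP h2] tA.
have e : [set c1 p | p in A] = setT.
  apply/setP => x; rewrite inE; apply/imsetP.
  case: (eqVneq x i) => [->|xi].
    by exists (togG A) => //; rewrite /togG c1mk.
  have/implyP/(_ xi)/existsP[p /andP[pA /eqP e]] := h2 x; by exists p.
have := leq_imset_card c1 A; by rewrite e cardsT card_ord.
Qed.
End Tog.

Lemma gen m n a b (c1 : PT m n -> 'I_a.+1) (c2 : PT m n -> 'I_b.+1)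
  (mk : 'I_a.+1 -> 'I_b.+1 -> PT m n)
  (c1mk : forall x y, c1 (mk x y) = x) (c2mk : forall x y, c2 (mk x y) = y)
  (hl : forall p q, lep p q = (c1 p <= c1 q) && (c2 p <= c2 q))
  (i : 'I_a.+1) (ha : 0 < a) (S : subcx (XX m n)) :
  (forall k (t : XX m n k), smem S t <-> ~~ missG c1 c2 i (img t)) -> expansion a S.
Proof.
move=> hS; apply: (@expansion_core _ _ _ _ (togG c1 c2 mk i) (colG c1 i) _ hS).
- move=> A q; exact: H1G.
- move=> A; exact: H2G.
- move=> A; exact: H3G.
- move=> A; exact: H4G.
- move=> A B; exact: H5G.
- move=> A; exact: HbG.
Qed.


Lemma ex_img1 m n k (t : XX m n k) (y : 'I_m.+1) :
  [exists p in img t, p.1 == y] = [exists a, sval t.1 a == y].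
Proof.
apply/existsP/existsP => [[p /andP[/imsetP[a _ ->] e]]|[a e]].
  by exists a.
by exists (pt t a); rewrite imset_f.
Qed.
Lemma ex_img2 m n k (t : XX m n k) (y : 'I_n.+1) :
  [exists p in img t, p.2 == y] = [exists a, sval t.2 a == y].
Proof.
apply/existsP/existsP => [[p /andP[/imsetP[a _ ->] e]]|[a e]].
  by exists a.
by exists (pt t a); rewrite imset_f.
Qed.

Lemma hS1 m n (i : 'I_m.+1) k (t : XX m n k) :
  smem (hornprodL n i) t <-> ~~ missG (fun p : PT m n => p.1) (fun p => p.2) i (img t).
Proof.
rewrite /missG negb_and !negb_forall; split.
  case => [[j [ji h]]|[j h]]; apply/orP; [right|left]; apply/existsP; exists j.
    rewrite negb_imply ji ex_img1 negb_exists /=; apply/forallP => a; exact: h.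
  rewrite ex_img2 negb_exists; apply/forallP => a; exact: h.
case/orP => /existsP[j].
  rewrite ex_img2 negb_exists => /forallP h; right; exists j => a; exact: h.
rewrite negb_imply ex_img1 negb_exists => /andP[ji /forallP h]; left; exists j; by split => //; move=> a; exact: h.
Qed.

Lemma hS2 m n (j : 'I_n.+1) k (t : XX m n k) :
  smem (hornprodR m j) t <-> ~~ missG (fun p : PT m n => p.2) (fun p => p.1) j (img t).
Proof.
rewrite /missG negb_and !negb_forall; split.
  case => [[i h]|[i [ij h]]]; apply/orP; [left|right]; apply/existsP; exists i.
    rewrite ex_img1 negb_exists; apply/forallP => a; exact: h.
  rewrite negb_imply ij ex_img2 negb_exists /=; apply/forallP => a; exact: h.
case/orP => /existsP[i].
  rewrite ex_img1 negb_exists => /forallP h; left; exists i => a; exact: h.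
rewrite negb_imply ex_img2 negb_exists => /andP[ij /forallP h]; right; exists i; by split => //; move=> a; exact: h.
Qed.

Theorem lemma4p1 :
  (forall (m n : nat) (i : 'I_m.+1), 1 <= m ->
     @expansion m (ProdS (Delta m) (Delta n)) (hornprodL n i)) /\
  (forall (m n : nat) (j : 'I_n.+1), 1 <= n ->
     @expansion n (ProdS (Delta m) (Delta n)) (hornprodR m j)).
Proof.
split.
  move=> m n i hm.
  apply: (@gen m n m n (fun p => p.1) (fun p => p.2) (fun x y => (x, y))) => //.
  exact: hS1.
move=> m n j hn.
apply: (@gen m n n m (fun p => p.2) (fun p => p.1) (fun x y => (y, x))) => //.
  by move=> p q; rewrite /lep andbC.
exact: hS2.
Qed.
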